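(* Let $f\in\mathbb{R}[x,y]$ be a polynomial of degree $n$ with homogeneous decomposition $f=\sum_{i=0}^n f_i$, and let $\mathrm{II}_f=f_{xx}dx^2+2f_{xy}\,dx\,dy+f_{yy}dy^2$. Let $\varrho:\mathbb{R}^3\setminus\{\omega=0\}\to\mathbb{R}^2$, $\varrho(u,v,\omega)=(u/\omega,v/\omega)$. Set $F(u,v,\omega)=\sum_{i=0}^n\omega^{n-i}f_i(u,v)$ and $A=-uF_{uu}-vF_{uv}$, $B=-uF_{uv}-vF_{vv}$, $S=u^2F_{uu}+2uvF_{uv}+v^2F_{vv}$ (all evaluated at $(u,v,\omega)$), and let $Q$ be the quadratic differential form on $\mathbb{R}^3$ $$Q=\omega^2F_{uu}\,du^2+2\omega^2F_{uv}\,du\,dv+\omega^2F_{vv}\,dv^2+2\omega A\,du\,d\omega+2\omega B\,dv\,d\omega+S\,d\omega^2 .$$ Then on $\mathbb{R}^3\setminus\{\omega=0\}$ one has $Q=\omega^{n+2}\varrho^*(\mathrm{II}_f)$. Consequently the restriction of $Q$ to the unit sphere $\mathbb{S}^2=\{u^2+v^2+\omega^2=1\}$ is an analytic quadratic differential form on $\mathbb{S}^2$ which, on each open hemisphere $\{\omega>0\}$ and $\{\omega<0\}$, is a nonvanishing multiple of the form induced from $\mathrm{II}_f$ by the Poincaré projections (so it extends these induced forms to the whole sphere), and the equator $\{\omega=0\}\cap\mathbb{S}^2$ is an integral curve of the fields of lines defined on $\mathbb{S}^2$ by this form.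
   Context: The Poincaré projections are $s_{1,2}:\mathbb{R}^2\to\mathbb{S}^2$, $s_{1}(x,y)=(x,y,1)/\sqrt{1+x^2+y^2}$, $s_2=-s_1$; their inverses on the open upper and lower hemispheres are the restrictions of $\varrho$. The induced forms are $(s_i^{-1})^*\mathrm{II}_f$ on the respective open hemispheres. The fields of lines defined by a quadratic differential form $Q$ on $\mathbb{S}^2$ assign to a point $p$ the directions $\xi\in T_p\mathbb{S}^2$ with $Q_p(\xi,\xi)=0$; the solutions of $\mathrm{II}_f=0$ in the plane are the (projected) fields of asymptotic directions of the graph of $f$. *)

(* Defs.v *)
From mathcomp Require Import all_boot all_order all_algebra.
From mathcomp Require Import mpoly.
Set Implicit Arguments. Unset Strict Implicit. Unset Printing Implicit Defensive.
Import GRing.Theory Num.Theory.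
Local Open Scope ring_scope.

Definition ix : 'I_2 := @Ordinal 2 0 isT.
Definition iy : 'I_2 := @Ordinal 2 1 isT.
Definition iu : 'I_3 := @Ordinal 3 0 isT.
Definition iv : 'I_3 := @Ordinal 3 1 isT.
Definition iw : 'I_3 := @Ordinal 3 2 isT.

Section Defs.
Variable R : realFieldType.

Definition pt2 (x y : R) : 'I_2 -> R := fun k => nth 0 [:: x; y] k.
Definition pt3 (u v w : R) : 'I_3 -> R := fun k => nth 0 [:: u; v; w] k.

Definition hcomp (f : {mpoly R[2]}) (i : nat) : {mpoly R[2]} :=
  pihomog mdeg i f.

(* the polynomial g(x,y) viewed as the polynomial g(u,v) in R[u,v,omega] *)
Definition lift23 (g : {mpoly R[2]}) : {mpoly R[3]} :=
  mmap (fun c : R => c%:MP) (fun j : 'I_2 => 'X_(widen_ord (leqnSn 2) j)) g.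

Definition homogF (n : nat) (f : {mpoly R[2]}) : {mpoly R[3]} :=
  \sum_(i < n.+1) 'X_iw ^+ (n - i) * lift23 (hcomp f i).

Definition d2 {k : nat} (p : {mpoly R[k]}) (i j : 'I_k) : {mpoly R[k]} :=
  mderiv i (mderiv j p).

Definition IImx (f : {mpoly R[2]}) (x y : R) : 'M[R]_2 :=
  \matrix_(i < 2, j < 2) (d2 f i j).@[pt2 x y].

Definition Qpoly (n : nat) (f : {mpoly R[2]}) : 'M[{mpoly R[3]}]_3 :=
  let F := homogF n f in
  let U := 'X_iu in let V := 'X_iv in let W := 'X_iw in
  let Fuu := d2 F iu iu in let Fuv := d2 F iu iv in let Fvv := d2 F iv iv in
  let A := - (U * Fuu) - V * Fuv in
  let B := - (U * Fuv) - V * Fvv in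
  let S := U ^+ 2 * Fuu + 2%:R * U * V * Fuv + V ^+ 2 * Fvv in
  \matrix_(i < 3, j < 3)
    match nat_of_ord i, nat_of_ord j with
    | 0, 0 => W ^+ 2 * Fuu
    | 0, 1 | 1, 0 => W ^+ 2 * Fuv
    | 1, 1 => W ^+ 2 * Fvv
    | 0, 2 | 2, 0 => W * A
    | 1, 2 | 2, 1 => W * B
    | _, _ => S
    end.

Definition Qat (n : nat) (f : {mpoly R[2]}) (u v w : R) : 'M[R]_3 :=
  map_mx (meval (pt3 u v w)) (Qpoly n f).

Definition rho (u v w : R) : R * R := (u / w, v / w).

Definition Jrho (u v w : R) : 'M[R]_(2, 3) :=
  \matrix_(i < 2, j < 3)
    match nat_of_ord i, nat_of_ord j with
    | 0, 0 => w^-1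
    | 0, 2 => - (u / w ^+ 2)
    | 1, 1 => w^-1
    | 1, 2 => - (v / w ^+ 2)
    | _, _ => 0
    end.

Definition pullbackII (f : {mpoly R[2]}) (u v w : R) : 'M[R]_3 :=
  (Jrho u v w)^T *m IImx f (rho u v w).1 (rho u v w).2 *m Jrho u v w.

Definition bform {k : nat} (M : 'M[R]_k) (xi eta : 'cV[R]_k) : R :=
  (xi^T *m M *m eta) 0 0.

Definition onS2 (u v w : R) : Prop := u ^+ 2 + v ^+ 2 + w ^+ 2 = 1.

Definition tangentS2 (u v w : R) (xi : 'cV[R]_3) : Prop :=
  u * xi iu 0 + v * xi iv 0 + w * xi iw 0 = 0.

Definition equator_tangent (u v : R) : 'cV[R]_3 :=
  \col_(i < 3) match nat_of_ord i with 0 => - v | 1 => u | _ => 0 end.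

End Defs.

(* Main.v *)
Require Import Defs.
From mathcomp Require Import all_boot all_order all_algebra.
From mathcomp Require Import mpoly.
From mathcomp Require Import ring lra zify.
Import GRing.Theory Num.Theory.
Local Open Scope ring_scope.

Section S.
Variable R : realFieldType.

Lemma mderivXn (k : nat) (i j : 'I_k) (p : nat) :
  mderiv i ('X_j ^+ p : {mpoly R[k]}) = ((i == j)%:R * p%:R) *: 'X_j ^+ p.-1.
Proof.
elim: p => [|p IH].
  by rewrite expr0 -mpolyC1 mderivC mulr0 scale0r.
rewrite exprS mderivM IH /= mderivX mnm1E.
have [->|ne] := eqVneq i j.
  have -> : (U_(j) - U_(j) = 0 :> 'X_{1..k})%MM by apply/mnmP=> l; rewrite mnmBE subnn mnm0E.
  rewrite mpolyX0 scale1r mul1r !mul1r.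
  case: p {IH} => [|p] /=; first by rewrite scale0r mulr0 addr0 scale1r.
  by rewrite -scalerAr -exprS [p.+2%:R]mulrS scalerDl scale1r.
by rewrite !mul0r !scale0r mul0r mulr0 addr0.
Qed.

Definition M3 (p q r : nat) : {mpoly R[3]} := 'X_iu ^+ p * 'X_iv ^+ q * 'X_iw ^+ r.
Definition M2 (p q : nat) : {mpoly R[2]} := 'X_ix ^+ p * 'X_iy ^+ q.

Lemma D3u p q r : mderiv iu (M3 p q r) = p%:R *: M3 p.-1 q r.
Proof.
rewrite /M3 !mderivM !mderivXn /=.
by rewrite ?mul0r ?mul1r ?scale0r ?mulr0 ?mul0r ?mulr0 ?addr0 ?add0r -?scalerAr -?scalerAl -?scalerAr -?scalerAl.
Qed.

Lemma D3v p q r : mderiv iv (M3 p q r) = q%:R *: M3 p q.-1 r.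
Proof.
rewrite /M3 !mderivM !mderivXn /=.
by rewrite ?mul0r ?mul1r ?scale0r ?mulr0 ?mul0r ?mulr0 ?addr0 ?add0r -?scalerAr -?scalerAl -?scalerAr -?scalerAl.
Qed.

Lemma D2x p q : mderiv ix (M2 p q) = p%:R *: M2 p.-1 q.
Proof.
rewrite /M2 !mderivM !mderivXn /=.
by rewrite ?mul0r ?mul1r ?scale0r ?mulr0 ?mul0r ?mulr0 ?addr0 ?add0r -?scalerAr -?scalerAl -?scalerAr -?scalerAl.
Qed.

Lemma D2y p q : mderiv iy (M2 p q) = q%:R *: M2 p q.-1.
Proof.
rewrite /M2 !mderivM !mderivXn /=.
by rewrite ?mul0r ?mul1r ?scale0r ?mulr0 ?mul0r ?mulr0 ?addr0 ?add0r -?scalerAr -?scalerAl -?scalerAr -?scalerAl.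
Qed.

Lemma mevalXn (k : nat) (x : 'I_k -> R) (i : 'I_k) (p : nat) :
  meval x ('X_i ^+ p) = x i ^+ p.
Proof.
elim: p => [|p IH]; first by rewrite !expr0 -mpolyC1 mevalC.
by rewrite !exprS mevalM IH mevalXU.
Qed.

Lemma evalM (u v w : R) c p q k n : w != 0 -> (c = 0 \/ (p + q + k + 2 = n)%N) ->
 meval (pt3 u v w) (c *: M3 p q k) = w ^+ n / w ^+ 2 * meval (pt2 (u/w) (v/w)) (c *: M2 p q).
Proof.
move=> wn0 [->|<-]; first by rewrite !scale0r !meval0 mulr0.
rewrite !mevalZ /M3 /M2 !mevalM !mevalXn /=.
rewrite !exprD !expr_div_n.
by field; rewrite !expf_neq0.
Qed.

Lemma wE0 : widen_ord (leqnSn 1) ord_max = ix. Proof. exact: val_inj. Qed.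
Lemma wE1 : @ord_max 1 = iy. Proof. exact: val_inj. Qed.
Lemma wEu : widen_ord (leqnSn 2) ix = iu. Proof. exact: val_inj. Qed.
Lemma wEv : widen_ord (leqnSn 2) iy = iv. Proof. exact: val_inj. Qed.

Lemma XmE (m : 'X_{1..2}) : 'X_[m] = M2 (m ix) (m iy) :> {mpoly R[2]}.
Proof. rewrite (mpolyXE_id R m) /M2 !big_ord_recr big_ord0 /= -[1 * _]/(GRing.mul 1 _) mul1r wE0; congr (_ * _); congr ('X_ _ ^+ m _); exact: val_inj. Qed.

Lemma mdeg2 (m : 'X_{1..2}) : mdeg m = (m ix + m iy)%N.
Proof. by rewrite mdegE !big_ord_recr big_ord0 /= wE0 wE1. Qed.

Lemma lift23X (m : 'X_{1..2}) : @lift23 R 'X_[m] = 'X_iu ^+ (m ix) * 'X_iv ^+ (m iy).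
Proof.
rewrite /lift23 /mmap msuppX big_seq1 mcoeffX eqxx mpolyC1 mul1r /mmap1.
rewrite /lift23 /mmap !big_ord_recr big_ord0 /= -[1 * _]/(GRing.mul 1 _) mul1r wE0 wEu.
congr (_ * _); congr ('X_ _ ^+ m _); exact: val_inj. Qed.

Lemma lift23D p q : @lift23 R (p + q) = lift23 p + lift23 q.
Proof. by rewrite /lift23 mmapD. Qed.

Lemma lift23Z c p : @lift23 R (c *: p) = c *: lift23 p.
Proof. by rewrite /lift23 mmapZ mul_mpolyC. Qed.

Lemma homogFD n p q : @homogF R n (p + q) = homogF n p + homogF n q.
Proof.
rewrite /homogF -big_split /=; apply: eq_bigr => i _.
by rewrite /hcomp pihomogD lift23D mulrDr.
Qed.

Lemma homogFZ n c p : @homogF R n (c *: p) = c *: homogF n p.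
Proof.
rewrite /homogF scaler_sumr; apply: eq_bigr => i _.
by rewrite /hcomp linearZ /= lift23Z scalerAr.
Qed.

Lemma homogFX (n : nat) (m : 'X_{1..2}) : (mdeg m < n.+1)%N ->
  @homogF R n 'X_[m] = M3 (m ix) (m iy) (n - mdeg m).
Proof.
move=> hm; rewrite /homogF (bigD1 (Ordinal hm)) //= big1 ?addr0.
  by rewrite /hcomp pihomogX eqxx lift23X /M3 mulrC.
move=> i /negbTE ne; rewrite /hcomp pihomogX.
have -> : (mdeg m == i) = false.
  by apply/negbTE; apply: contraFN ne => /eqP e; apply/eqP/val_inj.
by rewrite /lift23 mmap0 mulr0.
Qed.

Lemma keyX_uu n (m : 'X_{1..2}) u v w : (mdeg m < n.+1)%N -> w != 0 ->
 meval (pt3 u v w) (d2 (@homogF R n 'X_[m]) iu iu)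
 = w ^+ n / w ^+ 2 * meval (pt2 (u/w) (v/w)) (d2 'X_[m] ix ix).
Proof.
move=> hm wn0; rewrite homogFX // XmE /d2 D3u mderivZ D3u D2x mderivZ D2x !scalerA.
apply: evalM => //; move: hm; rewrite mdeg2.
case: (m ix) => [|[|a]] /= hm; [left; exact: mul0r | left; exact: mulr0 | right; lia].
Qed.

Lemma keyX_vv n (m : 'X_{1..2}) u v w : (mdeg m < n.+1)%N -> w != 0 ->
 meval (pt3 u v w) (d2 (@homogF R n 'X_[m]) iv iv)
 = w ^+ n / w ^+ 2 * meval (pt2 (u/w) (v/w)) (d2 'X_[m] iy iy).
Proof.
move=> hm wn0; rewrite homogFX // XmE /d2 D3v mderivZ D3v D2y mderivZ D2y !scalerA.
apply: evalM => //; move: hm; rewrite mdeg2.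
case: (m iy) => [|[|a]] /= hm; [left; exact: mul0r | left; exact: mulr0 | right; lia].
Qed.

Lemma keyX_uv n (m : 'X_{1..2}) u v w : (mdeg m < n.+1)%N -> w != 0 ->
 meval (pt3 u v w) (d2 (@homogF R n 'X_[m]) iu iv)
 = w ^+ n / w ^+ 2 * meval (pt2 (u/w) (v/w)) (d2 'X_[m] ix iy).
Proof.
move=> hm wn0; rewrite homogFX // XmE /d2 D3v mderivZ D3u D2y mderivZ D2x !scalerA.
apply: evalM => //; move: hm; rewrite mdeg2.
case: (m ix) => [|a]; first by left; exact: mulr0.
case: (m iy) => [|b]; first by left; exact: mul0r.
by move=> /= hm; right; lia.
Qed.

Lemma extend (n : nat) (L Rf : {mpoly R[2]} -> R) :
 (forall p q, L (p + q) = L p + L q) -> (forall c p, L (c *: p) = c * L p) ->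
 (forall p q, Rf (p + q) = Rf p + Rf q) -> (forall c p, Rf (c *: p) = c * Rf p) ->
 (forall m : 'X_{1..2}, (mdeg m < n.+1)%N -> L 'X_[m] = Rf 'X_[m]) ->
 forall g, (msize g <= n.+1)%N -> L g = Rf g.
Proof.
move=> LD LZ RD RZ HX g hg.
have L0 : L 0 = 0 by rewrite -(scale0r (0:{mpoly R[2]})) LZ mul0r.
have R0 : Rf 0 = 0 by rewrite -(scale0r (0:{mpoly R[2]})) RZ mul0r.
have : forall m, m \in msupp g -> (mdeg m < n.+1)%N.
  by move=> m /msize_mdeg_lt h; exact: leq_trans h hg.
move=> H; rewrite (mpolyE g); move: H.
elim: (msupp g) => [|m s IH] H; first by rewrite big_nil L0 R0.
rewrite big_cons LD RD LZ RZ HX ?IH //.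
  by move=> m' hm'; apply: H; rewrite inE hm' orbT.
by apply: H; rewrite inE eqxx.
Qed.

Lemma key n (f : {mpoly R[2]}) u v w (a b : 'I_3) (a' b' : 'I_2) :
  (msize f <= n.+1)%N -> w != 0 ->
  (forall m : 'X_{1..2}, (mdeg m < n.+1)%N ->
     meval (pt3 u v w) (d2 (@homogF R n 'X_[m]) a b)
     = w ^+ n / w ^+ 2 * meval (pt2 (u/w) (v/w)) (d2 'X_[m] a' b')) ->
  meval (pt3 u v w) (d2 (homogF n f) a b)
  = w ^+ n / w ^+ 2 * meval (pt2 (u/w) (v/w)) (d2 f a' b').
Proof.
move=> hf wn0 HX.
apply: (@extend n (fun g => meval (pt3 u v w) (d2 (homogF n g) a b))
               (fun g => w ^+ n / w ^+ 2 * meval (pt2 (u/w) (v/w)) (d2 g a' b'))) => //.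
- by move=> p q /=; rewrite homogFD /d2 !mderivD mevalD.
- by move=> c p /=; rewrite homogFZ /d2 !mderivZ mevalZ.
- by move=> p q /=; rewrite /d2 !mderivD mevalD mulrDr.
- by move=> c p /=; rewrite /d2 !mderivZ mevalZ mulrCA.
Qed.

Lemma sum2 (F : 'I_2 -> R) : \sum_(i < 2) F i = F ix + F iy.
Proof.
rewrite !big_ord_recr big_ord0 /= add0r; congr (F _ + F _); exact: val_inj.
Qed.

Lemma sum3 (F : 'I_3 -> R) : \sum_(i < 3) F i = F iu + F iv + F iw.
Proof.
rewrite !big_ord_recr big_ord0 /= add0r; congr (F _ + F _ + F _); exact: val_inj.
Qed.

Lemma I3 (i : 'I_3) : i = iu \/ i = iv \/ i = iw.
Proof.
case: i => [[|[|[|k]]] Hk]; [left|right;left|right;right|by []]; exact: val_inj.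
Qed.
End S.

Theorem proposition1 (R : realFieldType) (f : {mpoly R[2]}) (n : nat)
    (hdeg : msize f = n.+1) :
  (* Q = omega^(n+2) rho^*(II_f) on {omega <> 0} *)
  (forall u v w : R, w != 0 ->
      Qat n f u v w = w ^+ (n + 2) *: pullbackII f u v w)
  /\
  (* on the open hemispheres, Q restricted to S^2 is a nonvanishing multiple
     of the form induced from II_f by the Poincare projections *)
  (exists c : R -> R -> R -> R,
      forall u v w : R, onS2 u v w -> w != 0 ->
        c u v w != 0 /\
        forall xi eta : 'cV[R]_3,
          tangentS2 u v w xi -> tangentS2 u v w eta ->
          bform (Qat n f u v w) xi eta
          = c u v w * bform (IImx f (rho u v w).1 (rho u v w).2)
                            (Jrho u v w *m xi) (Jrho u v w *m eta))
  /\
  (* the equator is an integral curve of the fields of lines of Q on S^2 *)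
  (forall u v : R, onS2 u v 0 ->
      tangentS2 u v 0 (equator_tangent u v) /\
      bform (Qat n f u v 0) (equator_tangent u v) (equator_tangent u v) = 0).
Proof.
have hf : (msize f <= n.+1)%N by rewrite hdeg.
have Hyx : d2 f iy ix = d2 f ix iy by rewrite /d2 mderiv_comm.
have P1 : forall u v w : R, w != 0 ->
      Qat n f u v w = w ^+ (n + 2) *: pullbackII f u v w.
  move=> u v w wn0.
  have Kuu := @key R n f u v w iu iu ix ix hf wn0 (fun m hm => @keyX_uu R n m u v w hm wn0).
  have Kuv := @key R n f u v w iu iv ix iy hf wn0 (fun m hm => @keyX_uv R n m u v w hm wn0).
  have Kvv := @key R n f u v w iv iv iy iy hf wn0 (fun m hm => @keyX_vv R n m u v w hm wn0).
  have E2 : w ^+ (n + 2) = w ^+ n * w ^+ 2 by exact: exprD.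
  apply/matrixP => i j.
  case: (I3 i) => [->|[->|->]]; case: (I3 j) => [->|[->|->]];
  rewrite /pullbackII /Qat /IImx /Jrho !(mxE, sum2, sum3) /= Hyx
     ?(mevalM, mevalD, mevalB, mevalN, mevalXn, mevalXU, rmorph_nat) /= ?Kuu ?Kuv ?Kvv;
  by rewrite E2 /pt3 /= ?meval1; field; rewrite ?expf_neq0.
split => //; split.
  exists (fun _ _ w => w ^+ (n + 2)) => u v w _ wn0; split; first by rewrite expf_neq0.
  move=> xi eta _ _; rewrite /bform P1 // /pullbackII.
  by rewrite -scalemxAr -scalemxAl mxE trmx_mul !mulmxA.
move=> u v _; split.
  by rewrite /tangentS2 /equator_tangent !mxE /=; ring.
rewrite /bform /Qat /equator_tangent !(mxE, sum3) /=
   ?(mevalM, mevalD, mevalB, mevalN, mevalXn, mevalXU) /pt3 /=.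
ring.
Qed.
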